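(* There do not exist a Luzin set $L\subseteq\mathbb{R}$ and a Sierpiński set $S\subseteq\mathbb{R}$ such that $L+S=\{l+s:l\in L,s\in S\}$ is a Bernstein set.
   Context: A Luzin set is $L\subseteq\mathbb{R}$ with $|L|=\mathfrak{c}$ such that $L\cap M$ is countable for every meager $M$. A Sierpiński set is $S\subseteq\mathbb{R}$ with $|S|=\mathfrak{c}$ such that $S\cap N$ is countable for every Lebesgue-null $N$. A set $B\subseteq\mathbb{R}$ is a Bernstein set if for every nonempty perfect set $P\subseteq\mathbb{R}$ both $B\cap P\neq\emptyset$ and $(\mathbb{R}\setminus B)\cap P\neq\emptyset$. *)

(* Defs.v *)
From Stdlib Require Import Reals.
Open Scope R_scope.

Definition countable_set (A : R -> Prop) : Prop :=
  exists f : nat -> R, forall x, A x -> exists n, f n = x.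

Definition card_continuum (A : R -> Prop) : Prop :=
  exists f : R -> R,
    (forall x, A (f x)) /\
    (forall x y, f x = f y -> x = y) /\
    (forall y, A y -> exists x, f x = y).

Definition lebesgue_null (N : R -> Prop) : Prop :=
  forall eps : R, 0 < eps ->
    exists a b : nat -> R,
      (forall n, a n <= b n) /\
      (forall x, N x -> exists n, a n < x < b n) /\
      (forall n, sum_f_R0 (fun k => b k - a k) n <= eps).

Definition nowhere_dense (D : R -> Prop) : Prop :=
  forall a b : R, a < b ->
    exists c d : R, a <= c /\ c < d /\ d <= b /\
      (forall x, c < x < d -> ~ D x).

Definition meager (M : R -> Prop) : Prop :=
  exists D : nat -> (R -> Prop),
    (forall n, nowhere_dense (D n)) /\
    (forall x, M x -> exists n, D n x).

Definition closed_set (P : R -> Prop) : Prop :=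
  forall x, ~ P x -> exists e, 0 < e /\ forall y, Rabs (y - x) < e -> ~ P y.

Definition perfect_set (P : R -> Prop) : Prop :=
  closed_set P /\
  forall x, P x -> forall e, 0 < e -> exists y, P y /\ y <> x /\ Rabs (y - x) < e.

Definition Luzin_set (L : R -> Prop) : Prop :=
  card_continuum L /\
  forall M, meager M -> countable_set (fun x => L x /\ M x).

Definition Sierpinski_set (S : R -> Prop) : Prop :=
  card_continuum S /\
  forall N, lebesgue_null N -> countable_set (fun x => S x /\ N x).

Definition Bernstein_set (B : R -> Prop) : Prop :=
  forall P : R -> Prop, perfect_set P -> (exists x, P x) ->
    (exists x, B x /\ P x) /\ (exists x, ~ B x /\ P x).

Definition sumset (A B : R -> Prop) : R -> Prop :=
  fun z => exists a b, A a /\ B b /\ z = a + b.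

(* Main.v *)
Require Import Defs.
From Stdlib Require Import Reals.
From Stdlib Require Import Lra Lia Psatz ZArith Arith Classical FunctionalExtensionality Cantor ClassicalEpsilon.
Open Scope R_scope.
Notation closed_set := Defs.closed_set.


Definition bit (b : bool) : R := if b then 2 else 0.
Definition shift (w : nat -> bool) : nat -> bool := fun i => w (S i).

Fixpoint cc (L : nat) (w : nat -> bool) : R :=
  match L with
  | O => 0
  | S L => (bit (w O) + cc L (shift w)) / 10
  end.

Definition II (L : nat) (w : nat -> bool) (x : R) : Prop :=
  cc L w <= x <= cc L w + (/10) ^ L.

Lemma bit_bounds b : 0 <= bit b <= 2.
Proof. destruct b; simpl; lra. Qed.

Lemma pow10_pos L : 0 < (/10) ^ L.
Proof. apply pow_lt; lra. Qed.

Lemma pow10_le1 L : (/10) ^ L <= 1.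
Proof. induction L; simpl; [lra|]. pose proof (pow10_pos L). nra. Qed.

Lemma cc_bounds L : forall w, 0 <= cc L w <= 2/9.
Proof.
  induction L; intro w; simpl; [lra|].
  pose proof (IHL (shift w)); pose proof (bit_bounds (w O)). split; lra.
Qed.

Lemma cc_prefix L : forall w w', (forall i, (i < L)%nat -> w i = w' i) -> cc L w = cc L w'.
Proof.
  induction L; intros w w' H; simpl; [reflexivity|].
  rewrite (H O) by lia. rewrite (IHL (shift w) (shift w')); [reflexivity|].
  intros i Hi; unfold shift; apply H; lia.
Qed.

Lemma II_succ L w x : II (S L) w x <-> II L (shift w) (10 * x - bit (w O)).
Proof.
  unfold II; simpl. pose proof (pow10_pos L). split; intros [H1 H2]; split; nra.
Qed.

Lemma bit_sep b b' y y' : bit b <= y -> y <= bit b + 2/9 + 1 ->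
   bit b' <= y' -> y' <= bit b' + 2/9 + 1 -> y = y' -> b = b'.
Proof. destruct b, b'; simpl; intros; auto; lra. Qed.

Lemma II_sep L : forall w w' x, II L w x -> II L w' x -> forall i, (i < L)%nat -> w i = w' i.
Proof.
  induction L; intros w w' x H H' i Hi; [lia|].
  assert (E : w O = w' O).
  { unfold II in H, H'; simpl in H, H'.
    pose proof (cc_bounds L (shift w)); pose proof (cc_bounds L (shift w')).
    pose proof (pow10_pos L); pose proof (pow10_le1 L).
    apply (bit_sep _ _ (10*x) (10*x)); try lra. }
  destruct i as [|i]; [exact E|].
  apply II_succ in H; apply II_succ in H'. rewrite E in H.
  exact (IHL _ _ _ H H' i ltac:(lia)).
Qed.

Lemma cc_mono L : forall w, cc L w <= cc (S L) w.
Proof.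
  induction L; intro w.
  - simpl. pose proof (bit_bounds (w O)). lra.
  - change (cc (S L) w) with ((bit (w O) + cc L (shift w)) / 10).
    change (cc (S (S L)) w) with ((bit (w O) + cc (S L) (shift w)) / 10).
    pose proof (IHL (shift w)). lra.
Qed.

Lemma cc_mono_le N M w : (N <= M)%nat -> cc N w <= cc M w.
Proof.
  intro H; induction H; [lra|]. pose proof (cc_mono m w); lra.
Qed.

Lemma cc_tail N : forall K w, cc (N + K) w <= cc N w + 2/9 * (/10) ^ N.
Proof.
  induction N; intros K w; simpl.
  - pose proof (cc_bounds K w); lra.
  - pose proof (IHN K (shift w)). lra.
Qed.

Lemma cc_upper N M w : cc M w <= cc N w + (/10) ^ N.
Proof.
  pose proof (pow10_pos N).
  destruct (le_lt_dec N M) as [HN|HN].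
  - replace M with (N + (M - N))%nat by lia. pose proof (cc_tail N (M-N) w). lra.
  - pose proof (cc_mono_le M N w ltac:(lia)). lra.
Qed.

Lemma limit_point w : exists y, forall L, II L w y.
Proof.
  set (E := fun r => exists L, r = cc L w).
  assert (Hb : bound E). { exists 1. intros r [L ->]. pose proof (cc_bounds L w); lra. }
  assert (Hn : exists r, E r). { exists 0, O. reflexivity. }
  destruct (completeness E Hb Hn) as [y [Hub Hlub]].
  exists y. intro L. split.
  - apply Hub. exists L. reflexivity.
  - apply Hlub. intros r [M ->]. apply cc_upper.
Qed.

Lemma cc_even L : forall w, exists n : nat, cc L w * 10 ^ L = 2 * INR n.
Proof.
  induction L; intro w.
  - exists O. simpl. lra.
  - destruct (IHL (shift w)) as [n Hn].
    exists ((if w O then 1 else 0) * 10 ^ L + n)%nat.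
    rewrite plus_INR, mult_INR, pow_INR.
    simpl cc. replace (INR 10) with 10 by (simpl; lra).
    rewrite Rmult_plus_distr_l, <- Hn. destruct (w O); simpl bit; simpl INR; simpl pow; field.
Qed.


Definition TT (L : nat) (Phi : (nat -> bool) -> Prop) (x : R) : Prop :=
  exists w, Phi w /\ II L w x.

Definition bcons (b : bool) (w : nat -> bool) : nat -> bool :=
  fun i => match i with O => b | S i => w i end.

Lemma closed_union P Q : closed_set P -> closed_set Q -> closed_set (fun x => P x \/ Q x).
Proof.
  intros HP HQ x Hx; cbv beta in Hx.
  assert (nP : ~ P x) by tauto. assert (nQ : ~ Q x) by tauto.
  destruct (HP x nP) as [e1 [He1 H1]].
  destruct (HQ x nQ) as [e2 [He2 H2]].
  exists (Rmin e1 e2). split; [apply Rmin_pos; auto|].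
  intros y Hy [Py|Qy].
  - apply (H1 y); auto. pose proof (Rmin_l e1 e2); lra.
  - apply (H2 y); auto. pose proof (Rmin_r e1 e2); lra.
Qed.

Lemma closed_affine P d : closed_set P -> closed_set (fun x => P (10 * x - d)).
Proof.
  intros HP x Hx.
  destruct (HP _ Hx) as [e [He H]].
  exists (e / 10). split; [lra|].
  intros y Hy. apply H.
  replace (10 * y - d - (10 * x - d)) with (10 * (y - x)) by ring.
  rewrite Rabs_mult, Rabs_right by lra. lra.
Qed.

Lemma closed_ext P Q : (forall x, P x <-> Q x) -> closed_set P -> closed_set Q.
Proof.
  intros E HP x Hx. destruct (HP x) as [e [He H]]; [rewrite E; auto|].
  exists e; split; auto. intros y Hy Qy. apply (H y Hy). apply E; auto.
Qed.

Lemma closed_interval01 : closed_set (fun x => 0 <= x <= 1).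
Proof.
  intros x Hx.
  destruct (Rlt_or_le x 0) as [H|H].
  - exists (- x). split; [lra|]. intros y Hy Hy'.
    apply Rabs_def2 in Hy. lra.
  - assert (1 < x) by lra. exists (x - 1). split; [lra|]. intros y Hy Hy'.
    apply Rabs_def2 in Hy. lra.
Qed.

Lemma closed_empty : closed_set (fun _ => False).
Proof. intros x _. exists 1. split; [lra|]. tauto. Qed.

Lemma TT_closed L : forall Phi, closed_set (TT L Phi).
Proof.
  induction L; intro Phi.
  - destruct (classic (exists w, Phi w)) as [[w0 Hw0]|Hno].
    + apply (closed_ext (fun x => 0 <= x <= 1)); [|apply closed_interval01].
      intro x; unfold TT, II; simpl; split.
      * intro; exists w0; split; auto; lra.
      * intros [w [_ H]]; lra.
    + apply (closed_ext (fun _ => False)); [|apply closed_empty].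
      intro x; unfold TT; split; [tauto|]. intros [w [Hw _]]; apply Hno; eauto.
  - apply (closed_ext (fun x => TT L (fun w' => Phi (bcons false w')) (10 * x - bit false)
                            \/ TT L (fun w' => Phi (bcons true w')) (10 * x - bit true))).
    2: { apply closed_union; apply closed_affine; apply IHL. }
    intro x; split.
    + intros [[w [Hw H]]|[w [Hw H]]]; eexists; split; [exact Hw| |exact Hw|];
        apply II_succ; exact H.
    + intros [w [Hw H]]. apply II_succ in H.
      assert (Ew : bcons (w O) (shift w) = w).
      { apply functional_extensionality; intros [|i]; reflexivity. }
      destruct (w O) eqn:E0.
      * right. exists (shift w). rewrite Ew. split; auto.
      * left. exists (shift w). rewrite Ew. split; auto.
Qed.

Definition UU (x : R) : Prop := forall L, TT L (fun _ => True) x.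
Definition Phit (t : nat -> bool) (w : nat -> bool) : Prop := forall i, w (2 * i)%nat = t i.
Definition QQ (t : nat -> bool) (x : R) : Prop := forall L, TT L (Phit t) x.

Lemma QQ_UU t x : QQ t x -> UU x.
Proof. intros H L. destruct (H L) as [w [_ Hw]]. exists w; split; auto. Qed.

Lemma QQ_closed t : closed_set (QQ t).
Proof.
  intros x Hx. apply not_all_ex_not in Hx as [L HL].
  destruct (TT_closed L (Phit t) x HL) as [e [He H]].
  exists e; split; auto. intros y Hy Qy. apply (H y Hy). apply Qy.
Qed.

Lemma QQ_of_w t w : Phit t w -> exists y, QQ t y /\ forall L, II L w y.
Proof.
  intro Hw. destruct (limit_point w) as [y Hy]. exists y; split; auto.
  intro L. exists w; split; auto.
Qed.

Lemma QQ_nonempty t : exists x, QQ t x.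
Proof.
  destruct (QQ_of_w t (fun i => t (Nat.div2 i))) as [y [Hy _]].
  - intro i. rewrite Nat.div2_double. reflexivity.
  - exists y; exact Hy.
Qed.

Lemma small_pow e : 0 < e -> exists L, (/10) ^ L < e.
Proof.
  intro He. destruct (pow_lt_1_zero (/10) ltac:(rewrite Rabs_right; lra) e He) as [N HN].
  exists N. specialize (HN N (le_n _)). rewrite Rabs_right in HN; auto.
  apply Rle_ge, pow_le; lra.
Qed.

Lemma QQ_perfect t : perfect_set (QQ t).
Proof.
  split; [apply QQ_closed|].
  intros x Hx e He.
  destruct (small_pow e He) as [L HL].
  destruct (Hx L) as [w [Hw HI]].
  set (p := (2 * L + 1)%nat).
  set (w1 := fun i => if Nat.eqb i p then false else w i).
  set (w2 := fun i => if Nat.eqb i p then true else w i).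
  assert (Hp1 : Phit t w1).
  { intro i. unfold w1. destruct (Nat.eqb_spec (2*i) p); [unfold p in *; lia|]. apply Hw. }
  assert (Hp2 : Phit t w2).
  { intro i. unfold w2. destruct (Nat.eqb_spec (2*i) p); [unfold p in *; lia|]. apply Hw. }
  destruct (QQ_of_w t w1 Hp1) as [y1 [Q1 I1]].
  destruct (QQ_of_w t w2 Hp2) as [y2 [Q2 I2]].
  assert (C1 : cc L w1 = cc L w).
  { apply cc_prefix. intros i Hi. unfold w1. destruct (Nat.eqb_spec i p); [unfold p in *; lia|]; auto. }
  assert (C2 : cc L w2 = cc L w).
  { apply cc_prefix. intros i Hi. unfold w2. destruct (Nat.eqb_spec i p); [unfold p in *; lia|]; auto. }
  assert (Hne : y1 <> y2).
  { intro E. subst y2. assert (w1 p = w2 p).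
    { apply (II_sep (S p) w1 w2 y1 (I1 _) (I2 _)); lia. }
    unfold w1, w2 in H. rewrite Nat.eqb_refl in H. discriminate. }
  pose proof (I1 L) as J1; pose proof (I2 L) as J2. unfold II in J1, J2, HI.
  rewrite C1 in J1; rewrite C2 in J2.
  destruct (Req_dec y1 x) as [E|E].
  - exists y2. split; auto. split; [congruence|].
    apply Rabs_def1; lra.
  - exists y1. split; auto. split; auto. apply Rabs_def1; lra.
Qed.

Lemma QQ_disj t t' x : QQ t x -> QQ t' x -> forall i, t i = t' i.
Proof.
  intros H H' i.
  destruct (H (S (2 * i))) as [w [Hw Iw]].
  destruct (H' (S (2 * i))) as [w' [Hw' Iw']].
  rewrite <- (Hw i), <- (Hw' i). apply (II_sep _ _ _ _ Iw Iw'). lia.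
Qed.

Lemma UU_nonneg y : UU y -> 0 <= y.
Proof. intro H. destruct (H O) as [w [_ Hw]]. unfold II in Hw; simpl in Hw; lra. Qed.

Lemma UU_nd : nowhere_dense UU.
Proof.
  intros a b Hab.
  destruct (Rlt_or_le a 0) as [Ha|Ha].
  { exists a, (Rmin b 0). pose proof (Rmin_l b 0); pose proof (Rmin_r b 0).
    repeat split; try lra. { apply Rmin_glb_lt; lra. }
    intros y Hy Uy. pose proof (UU_nonneg y Uy). lra. }
  destruct (small_pow ((b - a)/4) ltac:(lra)) as [L HL].
  set (K := 10 ^ L).
  assert (HK : 0 < K) by (apply pow_lt; lra).
  assert (Hd : (/10) ^ L = / K) by (unfold K; rewrite pow_inv; reflexivity).
  rewrite Hd in HL.
  set (z := up (a * K / 2)).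
  destruct (archimed (a * K / 2)) as [Hz1 Hz2]. fold z in Hz1, Hz2.
  assert (HKi : 0 < / K) by (apply Rinv_0_lt_compat; auto).
  assert (KK : K * / K = 1) by (field; lra).
  exists ((2 * IZR z + 1) * / K), ((2 * IZR z + 2) * / K).
  assert (A1 : a < 2 * IZR z * / K).
  { replace a with (a * K / 2 * 2 * / K) by (field; lra). nra. }
  assert (A2 : 2 * IZR z * / K <= a + 2 * / K).
  { replace a with (a * K / 2 * 2 * / K) by (field; lra). nra. }
  repeat split; try nra.
  intros y [Hy1 Hy2] Uy.
  destruct (Uy L) as [w [_ [Hw1 Hw2]]].
  destruct (cc_even L w) as [n Hn]. fold K in Hn.
  assert (Ec : cc L w = 2 * INR n * / K) by (rewrite <- Hn; field; lra).
  rewrite Ec, Hd in *.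
  assert (Hnz : IZR z < INR n).
  { assert (2 * IZR z + 1 < 2 * INR n + 1) by (apply (Rmult_lt_reg_r (/K)); nra). lra. }
  rewrite INR_IZR_INZ in Hnz, Hw1. apply lt_IZR in Hnz.
  assert (Hle : IZR (z + 1) <= IZR (Z.of_nat n)) by (apply IZR_le; lia).
  rewrite plus_IZR in Hle. simpl in Hle. nra.
Qed.

Lemma nd_shift D x : nowhere_dense D -> nowhere_dense (fun y => D (y + x)).
Proof.
  intros H a b Hab.
  destruct (H (a + x) (b + x) ltac:(lra)) as [c [d [H1 [H2 [H3 H4]]]]].
  exists (c - x), (d - x). repeat split; try lra.
  intros y Hy. apply H4. lra.
Qed.

Lemma meager_of_nd D : nowhere_dense D -> meager D.
Proof. intro H. exists (fun _ => D). split; auto. intros x Hx; exists O; auto. Qed.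

Lemma coding L : forall w : nat -> bool, exists j, (j < 2 ^ L)%nat /\
   forall i, (i < L)%nat -> Nat.testbit j i = w i.
Proof.
  induction L; intro w.
  - exists O. split; [simpl; lia|]. intros; lia.
  - destruct (IHL (shift w)) as [j [Hj Hb]].
    destruct (w O) eqn:E0.
    + exists (2 * j + 1)%nat. split; [simpl; lia|].
      intros [|i] Hi. { rewrite Nat.testbit_odd_0; auto. }
      rewrite Nat.testbit_odd_succ by lia. apply Hb; lia.
    + exists (2 * j)%nat. split; [simpl; lia|].
      intros [|i] Hi. { rewrite Nat.testbit_even_0; auto. }
      rewrite Nat.testbit_even_succ by lia. apply Hb; lia.
Qed.

Definition NN (q : nat -> R) (y : R) : Prop :=
  forall k, exists n z, UU z /\ Rabs (z - (y + q n)) < (/10) ^ (n + k).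

Definition valid k p := (2 ^ k <=? p)%nat.

Definition ca (q : nat -> R) k p : R :=
  if valid k p then cc (Nat.log2 p) (Nat.testbit (p - 2 ^ Nat.log2 p))
                   - q (Nat.log2 p - k)%nat - (/10) ^ (Nat.log2 p) else 0.
Definition cb (q : nat -> R) k p : R :=
  if valid k p then cc (Nat.log2 p) (Nat.testbit (p - 2 ^ Nat.log2 p))
                   + 2 * (/10) ^ (Nat.log2 p) - q (Nat.log2 p - k)%nat else 0.

Definition FF k p : R := 12 / INR (Nat.max p (2 ^ k)).

Lemma tele (F : nat -> R) P : sum_f_R0 (fun p => F p - F (S p)) P = F O - F (S P).
Proof. induction P; simpl; [ring|]. rewrite IHP. ring. Qed.

Lemma pow4_10 L : (/10) ^ L * 4 ^ L <= 1.
Proof.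
  induction L; simpl; [lra|]. pose proof (pow10_pos L). pose proof (pow_lt 4 L ltac:(lra)). nra.
Qed.

Lemma len_bound q k p : cb q k p - ca q k p <= FF k p - FF k (S p).
Proof.
  unfold cb, ca, FF, valid.
  destruct (Nat.leb_spec (2 ^ k) p) as [H|H].
  - rewrite !Nat.max_l by lia.
    assert (Hp : (0 < p)%nat). { pose proof (Nat.pow_nonzero 2 k). lia. }
    destruct (Nat.log2_spec p Hp) as [_ H2].
    set (L := Nat.log2 p) in *.
    assert (HS : INR (S p) <= 2 ^ S L).
    { rewrite <- (pow_INR 2). replace (INR 2) with 2 by (simpl; lra). apply le_INR. lia. }
    assert (Hp0 : 0 < INR p) by (apply lt_0_INR; lia).
    rewrite S_INR in *.
    assert (E : 12 / INR p - 12 / (INR p + 1) = 12 / (INR p * (INR p + 1))) by (field; lra).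
    rewrite E.
    assert (H4 : INR p * (INR p + 1) <= 4 * 4 ^ L).
    { replace (4 * 4 ^ L) with (2 ^ S L * 2 ^ S L).
      - apply Rmult_le_compat; lra.
      - rewrite <- Rpow_mult_distr. simpl. replace (2*2) with 4 by ring. ring. }
    pose proof (pow4_10 L). pose proof (pow10_pos L).
    apply (Rmult_le_reg_r (INR p * (INR p + 1))); [nra|].
    unfold Rdiv. rewrite Rmult_assoc, Rinv_l by nra. nra.
  - rewrite !Nat.max_r by lia. lra.
Qed.

Lemma small_pow2 e : 0 < e -> exists k, 12 * (/2) ^ k < e.
Proof.
  intro He. destruct (pow_lt_1_zero (/2) ltac:(rewrite Rabs_right; lra) (e/12) ltac:(lra)) as [N HN].
  exists N. specialize (HN N (le_n _)). rewrite Rabs_right in HN. lra.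
  apply Rle_ge, pow_le; lra.
Qed.

Lemma NN_null q : lebesgue_null (NN q).
Proof.
  intros eps He.
  destruct (small_pow2 eps He) as [k Hk].
  exists (ca q k), (cb q k). split; [|split].
  - intro p. unfold ca, cb. destruct (valid k p); [|lra].
    pose proof (pow10_pos (Nat.log2 p)). lra.
  - intros y Hy. destruct (Hy k) as [n [z [Uz Hz]]].
    set (L := (n + k)%nat) in *.
    destruct (Uz L) as [w [_ Hw]].
    destruct (coding L w) as [j [Hj Hb]].
    exists (2 ^ L + j)%nat.
    assert (Hlog : Nat.log2 (2 ^ L + j) = L).
    { apply Nat.log2_unique; [lia|]. simpl. lia. }
    assert (Hv : valid k (2 ^ L + j) = true).
    { unfold valid. apply Nat.leb_le. pose proof (Nat.pow_le_mono_r 2 k L ltac:(lia) ltac:(unfold L; lia)). lia. }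
    unfold ca, cb. rewrite Hv, Hlog.
    replace (2 ^ L + j - 2 ^ L)%nat with j by lia.
    replace (L - k)%nat with n by (unfold L; lia).
    rewrite (cc_prefix L (Nat.testbit j) w) by auto.
    unfold II in Hw. apply Rabs_def2 in Hz. lra.
  - intro P.
    apply Rle_trans with (sum_f_R0 (fun p => FF k p - FF k (S p)) P).
    { apply sum_Rle. intros; apply len_bound. }
    rewrite tele. unfold FF. rewrite Nat.max_0_l.
    assert (0 < INR (Nat.max (S P) (2 ^ k))) by (apply lt_0_INR; lia).
    assert (12 / INR (2 ^ k) = 12 * (/2) ^ k).
    { rewrite pow_INR, pow_inv. simpl INR. replace (1+1) with 2 by ring. reflexivity. }
    assert (0 < 12 / INR (Nat.max (S P) (2 ^ k))) by (apply Rdiv_lt_0_compat; lra).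
    lra.
Qed.

Definition qq (p : nat) : R := let (i, j) := Cantor.of_nat p in INR i / INR (S j) - INR j.

Lemma qq_dense a b : a < b -> exists p, a < qq p < b.
Proof.
  intro Hab.
  destruct (INR_unbounded (Rmax (- a) (/ (b - a)))) as [j Hj].
  pose proof (Rmax_l (- a) (/ (b - a))); pose proof (Rmax_r (- a) (/ (b - a))).
  assert (Hj1 : 0 < a + INR j) by lra.
  assert (HS : INR (S j) = INR j + 1) by (apply S_INR). pose proof (pos_INR j).
  assert (Hj2 : 1 < (b - a) * INR (S j)).
  { assert (Hba : 0 < b - a) by lra. assert (Hinv : / (b - a) < INR j) by lra.
    apply (Rmult_lt_compat_l (b - a)) in Hinv; auto. rewrite Rinv_r in Hinv by lra. nra. }
  set (x0 := (a + INR j) * INR (S j)).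
  destruct (archimed x0) as [Hu1 Hu2].
  assert (Hx0 : 0 < x0) by (unfold x0; apply Rmult_lt_0_compat; lra).
  set (z := up x0) in *.
  assert (Hz : (0 < z)%Z) by (apply lt_IZR; lra).
  exists (Cantor.to_nat (Z.to_nat z, j)). unfold qq. rewrite Cantor.cancel_of_to.
  assert (Ei : INR (Z.to_nat z) = IZR z) by (rewrite INR_IZR_INZ, Z2Nat.id; [reflexivity|lia]).
  rewrite Ei.
  assert (HSp : 0 < INR (S j)) by lra.
  split.
  - apply (Rplus_lt_reg_r (INR j)). replace (IZR z / INR (S j) - INR j + INR j) with (IZR z / INR (S j)) by ring.
    apply (Rmult_lt_reg_r (INR (S j))); auto. unfold Rdiv. rewrite Rmult_assoc, Rinv_l by lra.
    unfold x0 in Hu1. lra.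
  - apply (Rplus_lt_reg_r (INR j)). replace (IZR z / INR (S j) - INR j + INR j) with (IZR z / INR (S j)) by ring.
    apply (Rmult_lt_reg_r (INR (S j))); auto. unfold Rdiv. rewrite Rmult_assoc, Rinv_l by lra.
    unfold x0 in Hu2. nra.
Qed.

Definition GG (x : R) : Prop := forall k, exists n, Rabs (x - qq n) < (/10) ^ (n + k).

Lemma GG_compl_meager : meager (fun x => ~ GG x).
Proof.
  exists (fun k g => forall n, (/10) ^ (n + k) <= Rabs (g - qq n)). split.
  - intros k a b Hab.
    destruct (qq_dense a b Hab) as [n Hn].
    set (r := (/10) ^ (n + k)). assert (0 < r) by apply pow10_pos.
    exists (Rmax a (qq n - r)), (Rmin b (qq n + r)).
    pose proof (Rmax_l a (qq n - r)); pose proof (Rmax_r a (qq n - r)).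
    pose proof (Rmin_l b (qq n + r)); pose proof (Rmin_r b (qq n + r)).
    repeat split.
    + lra.
    + apply Rmax_lub_lt; apply Rmin_glb_lt; lra.
    + lra.
    + intros x [Hx1 Hx2] Hd. specialize (Hd n). fold r in Hd.
      assert (Rabs (x - qq n) < r) by (apply Rabs_def1; lra). lra.
  - intros x Hx. apply not_all_ex_not in Hx as [k Hk]. exists k. intro n.
    apply Rnot_lt_le. intro H. apply Hk. exists n. exact H.
Qed.

Lemma countable_sub (P Q : R -> Prop) : (forall x, P x -> Q x) -> countable_set Q -> countable_set P.
Proof. intros H [f Hf]. exists f. intros x Px. apply Hf, H, Px. Qed.

Definition pick_enum (P : nat -> R -> Prop) (H : forall i, countable_set (P i)) : nat -> nat -> R :=
  fun i => proj1_sig (constructive_indefinite_description _ (H i)).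

Lemma pick_enum_spec P H i x : P i x -> exists j, pick_enum P H i j = x.
Proof. unfold pick_enum. destruct (constructive_indefinite_description _ (H i)) as [g Hg]. simpl. auto. Qed.

Theorem mainTheorem20 :
  ~ (exists L S : R -> Prop,
        Luzin_set L /\ Sierpinski_set S /\ Bernstein_set (sumset L S)).
Proof.
  intros [L [S [[_ HL] [[_ HS] HB]]]].
  destruct (HS (NN qq) (NN_null qq)) as [h Hh].
  assert (Hk : forall j, countable_set ((fun j y => L y /\ UU (y + h j)) j)).
  { intro j. apply HL. apply meager_of_nd. apply (nd_shift UU (h j) UU_nd). }
  set (kf := pick_enum _ Hk).
  destruct (HL _ GG_compl_meager) as [f Hf].
  assert (Hg : forall i, countable_set ((fun i y => S y /\ UU (f i + y)) i)).
  { intro i. apply (countable_sub _ (fun y => S y /\ NN (fun _ => f i) y)).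
    - intros y [Sy Uy]. split; auto. intro k. exists O, (f i + y). split; auto.
      replace (f i + y - (y + f i)) with 0 by ring. rewrite Rabs_R0. apply pow10_pos.
    - apply HS, NN_null. }
  set (g := pick_enum _ Hg).
  set (e := fun p => let (i, j) := Cantor.of_nat (Nat.div2 p) in
                     if Nat.even p then kf j i + h j else f i + g i j).
  assert (He : forall z, sumset L S z -> UU z -> exists p, e p = z).
  { intros z [l [s [Ll [Ss ->]]]] Uz.
    destruct (classic (GG l)) as [Gl|nGl].
    - destruct (Hh s) as [j Hj].
      { split; auto. intro k. destruct (Gl k) as [n Hn]. exists n, (l + s). split; auto.
        replace (l + s - (s + qq n)) with (l - qq n) by ring. exact Hn. }
      destruct (pick_enum_spec _ Hk j l) as [i Hi].
      { simpl. rewrite Hj. split; auto. }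
      exists (2 * Cantor.to_nat (i, j))%nat. unfold e.
      rewrite Nat.div2_double, Cantor.cancel_of_to, Nat.even_mul. simpl.
      fold kf in Hi. rewrite Hi, Hj. reflexivity.
    - destruct (Hf l) as [i Hi]; [split; auto|].
      destruct (pick_enum_spec _ Hg i s) as [j Hj].
      { simpl. rewrite Hi. split; auto. }
      exists (Nat.succ (2 * Cantor.to_nat (i, j))%nat). unfold e.
      rewrite Nat.div2_succ_double, Cantor.cancel_of_to, Nat.even_succ, Nat.odd_mul. simpl.
      fold g in Hj. rewrite Hi, Hj. reflexivity. }
  set (d := fun n => if excluded_middle_informative (exists t, QQ t (e n) /\ t n = true)
                     then false else true).
  destruct (HB (QQ d) (QQ_perfect d) (QQ_nonempty d)) as [[x [Sx Qx]] _].
  destruct (He x Sx (QQ_UU d x Qx)) as [n En].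
  rewrite <- En in Qx.
  destruct (classic (exists t, QQ t (e n) /\ t n = true)) as [[t [Qt Tt]]|Hno].
  - assert (Dn : d n = false).
    { unfold d. destruct (excluded_middle_informative _) as [_|Hc]; auto.
      exfalso; apply Hc; eauto. }
    rewrite (QQ_disj t d (e n) Qt Qx n), Dn in Tt. discriminate.
  - assert (Dn : d n = true).
    { unfold d. destruct (excluded_middle_informative _) as [Hc|_]; auto.
      }
    apply Hno. exists d. auto.
Qed.
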